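(* Let $k\ge2$ and let $u_1,\dots,u_k,v_1,\dots,v_k$ be nonnegative integers with $$u_1<u_2<v_1<u_3<v_2<u_4<v_3<\dots<u_k<v_{k-1}<v_k.$$ Then $$\det F_{\mathbf u,\mathbf v}=(-y)^{\sum_{i=1}^{k-1}(v_i-u_{i+1}+1)}\,q^{\sum_{i=1}^{k-1}\left[\binom{v_i}2-\binom{u_{i+1}-1}2\right]}\cdot F_{u_2-u_1-1}(xq^{u_1},yq^{u_1},q)\,F_{v_k-v_{k-1}-1}(xq^{v_{k-1}+1},yq^{v_{k-1}+1},q)\prod_{i=1}^{k-2}F_{u_{i+2}-v_i-2}(xq^{v_i+1},yq^{v_i+1},q),$$ with the convention $F_{-1}:=0$.
   Context: $F_n(x,y,q)=\sum_{\pi}x^{s(\pi)}y^{d(\pi)}q^{rb(\pi)}$, where: - $\pi$ ranges over layered matchings of $[n]$, i.e. set partitions whose blocks are consecutive intervals $[1,i_1]/\dots/[i_{k-1}+1,n]$ of size $1$ or $2$; - $s(\pi)$ and $d(\pi)$ are the numbers of blocks of size $1$ and $2$; - for $\pi=B_1/\dots/B_k$ with $\min B_1<\dots<\min B_k$, $rb(\pi)$ is the number of pairs $(b,B_j)$ with $b\in B_i$, $j>i$, $\max B_j>b$. Equivalently, $F_0=1$, $F_1=x$, and $F_n=xq^{n-1}F_{n-1}+yq^{n-2}F_{n-2}$ for $n\ge2$. Let $F$ be the infinite matrix with rows and columns indexed by $0,1,2,\dots$. Its $(a,b)$ entry is $F_{b-a}(xq^a,yq^a,q)$ if $b\ge a$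 and $0$ if $b<a$. $F_{\mathbf u,\mathbf v}$ is the $k\times k$ submatrix with rows $u_1<\dots<u_k$ and columns $v_1<\dots<v_k$. $\binom{m}{2}=m(m-1)/2$. *)

(* Defs.v *)
From HB Require Import structures.
From mathcomp Require Import all_boot all_order all_algebra.
Set Implicit Arguments. Unset Strict Implicit. Unset Printing Implicit Defensive.
Import Order.TTheory GRing.Theory Num.Theory.
Local Open Scope ring_scope.

(* Fpair n = (F_n, F_{n+1}) evaluated at (x, y, q). *)
Fixpoint Fpair (R : comRingType) (x y q : R) (n : nat) : R * R :=
  match n with
  | 0 => (1, x)
  | m.+1 => let: (a, b) := Fpair x y q m in
            (b, x * q ^+ m.+1 * b + y * q ^+ m * a)
  end.

Definition F (R : comRingType) (n : nat) (x y q : R) : R := (Fpair x y q n).1.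

Definition Fz (R : comRingType) (n : int) (x y q : R) : R :=
  match n with
  | Posz m => F m x y q
  | Negz _ => 0
  end.

Definition Fmat_entry (R : comRingType) (x y q : R) (a b : nat) : R :=
  if (a <= b)%N then F (b - a) (x * q ^+ a) (y * q ^+ a) q else 0.

(* The k x k submatrix with rows u_1..u_k and columns v_1..v_k (1-based u, v). *)
Definition Fsub (R : comRingType) (x y q : R) (k : nat) (u v : nat -> nat)
  : 'M[R]_k :=
  \matrix_(i < k, j < k) Fmat_entry x y q (u i.+1) (v j.+1).

(* Main.v *)
Require Import Defs.
From HB Require Import structures.
From mathcomp Require Import all_boot all_order all_algebra.
Import Order.TTheory GRing.Theory Num.Theory.
Local Open Scope ring_scope.

Section S.
Variables (R : comRingType) (x y q : R).

Lemma FS2 n (X Y : R) : F n.+2 X Y q = X * q ^+ n.+1 * F n.+1 X Y q + Y * q ^+ n * F n X Y q.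
Proof. rewrite /F /=. by case: (Fpair X Y q n). Qed.
Lemma F0 (X Y : R) : F 0 X Y q = 1. Proof. by []. Qed.
Lemma F1 (X Y : R) : F 1 X Y q = X. Proof. by []. Qed.

Local Notation G := (Fmat_entry x y q).

Lemma Glt a b : (b < a)%N -> G a b = 0.
Proof. by rewrite /Fmat_entry ltnNge => /negbTE ->. Qed.
Arguments Glt {a b}.
Lemma Gdiag a : G a a = 1.
Proof. by rewrite /Fmat_entry leqnn subnn. Qed.

Lemma colrec z c : (z <= c.+1)%N ->
  G z c.+2 = x * q ^+ c.+1 * G z c.+1 + y * q ^+ c * G z c.
Proof.
rewrite leq_eqVlt => /orP [/eqP ->|].
  rewrite Gdiag (Glt (ltnSn c)) /Fmat_entry leqnSn subSnn F1.
  idtac.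
  rewrite mulr0 addr0 mulr1.
  by [].
move=> zc; have {}zc : (z <= c)%N by [].
rewrite /Fmat_entry zc (leqW zc) (leqW (leqW zc)) !subSn ?(leqW zc) // FS2.
by rewrite -!(mulrA _ (q ^+ z)) -!exprD addnS subnKC.
Qed.

Lemma aux1 (A B C D p r : R) :
  A * (p * B + r * C) - B * (p * A + r * D) = r * (A * C - B * D).
Proof.
rewrite !mulrDr opprD addrACA !mulrA (mulrC A p) (mulrC B p) (mulrC A r) (mulrC B r).
by rewrite -!mulrA (mulrC A B) subrr add0r mulrN.
Qed.

Lemma aux2 (A B A1 B1 A0 B0 p r : R) :
  A * (p * B1 + r * B0) - B * (p * A1 + r * A0) =
  p * (A * B1 - B * A1) + r * (A * B0 - B * A0).
Proof.
rewrite !mulrDr opprD addrACA !mulrN !mulrA (mulrC A p) (mulrC B p) (mulrC A r) (mulrC B r).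
by [].
Qed.

Lemma aux3 (a b c d e : R) : a * b * (c * d * e) = a * c * (b * d) * e.
Proof. by rewrite !mulrA (mulrAC a b c) (mulrAC (a * c) b d). Qed.

Definition U a b e := G a e * G b e.+1 - G b e * G a e.+1.

Lemma Ulem a b m : (a < b)%N ->
  U a b (b.-1 + m) = (- y) ^+ m * q ^+ ('C(b.-1 + m, 2) - 'C(b.-1, 2)) * G a b.-1.
Proof.
move=> ab; have b0 : (0 < b)%N by apply: leq_ltn_trans ab.
elim: m => [|m IH].
  rewrite addn0 subnn expr0 mulr1 mul1r /U prednK // Gdiag mulr1.
  have hb : (b.-1 < b)%N by rewrite prednK.
  by rewrite (Glt hb) mul0r subr0.
rewrite addnS /U !colrec; last first.
- by rewrite -addSn prednK // leq_addr.
- by apply: (leq_trans (ltnW ab)); rewrite -addSn prednK // leq_addr.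
set e := (b.-1 + m)%N.
rewrite aux1.
have -> : G a e.+1 * G b e - G b e.+1 * G a e = - U a b e.
  by rewrite /U opprB (mulrC (G a e.+1)) (mulrC (G b e.+1)).
rewrite IH binS bin1 (addnC 'C(e, 2)) -addnBA ?leq_bin2l ?leq_addr //.
rewrite mulrN -mulNr -mulNr exprS exprD.
by rewrite aux3.
Qed.

Lemma Wlem a b c m : (a <= c)%N -> (b <= c)%N ->
  G a c * G b (c + m) - G b c * G a (c + m) = U a b c * G c.+1 (c + m).
Proof.
move=> ac bc.
suff: (G a c * G b (c + m) - G b c * G a (c + m) = U a b c * G c.+1 (c + m)) /\
      (G a c * G b (c + m.+1) - G b c * G a (c + m.+1) = U a b c * G c.+1 (c + m.+1)) by case.
elim: m => [|m [IH1 IH2]].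
  rewrite addn0 addn1 Gdiag mulr1 (Glt (ltnSn c)) mulr0 (mulrC (G a c)) subrr.
  by split.
split=> //.
rewrite !addnS !colrec ?addnS ?ltnS ?leq_addr //; last 2 first.
- exact: leq_trans ac (leq_trans (leq_addr m c) (leqnSn _)).
- exact: leq_trans bc (leq_trans (leq_addr m c) (leqnSn _)).
rewrite aux2 -!addnS IH1 IH2.
by rewrite !mulrA !(mulrC _ (U a b c)) -!mulrA -mulrDr.
Qed.

Lemma key a b c d : (a < b)%N -> (b <= c)%N -> (c <= d)%N ->
  G a c * G b d - G b c * G a d =
  G a (b - 1) * ((- y) ^+ (c - b + 1) * q ^+ ('C(c, 2) - 'C(b - 1, 2))) * G c.+1 d.
Proof.
move=> ab bc cd.
have b0 : (0 < b)%N by apply: leq_ltn_trans ab.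
rewrite -(subnKC cd) Wlem ?(leq_trans (ltnW ab)) // subnKC //.
have ec : c = (b.-1 + (c - b + 1))%N.
  by rewrite addn1 addnS -addSn prednK // subnKC.
rewrite {1}ec Ulem // -ec subn1.
by rewrite (mulrC (G a b.-1)).
Qed.

Definition shift (f : nat -> nat) i := f i.+1.

Definition Tf n (u v : nat -> nat) : R :=
  (- y) ^+ (\sum_(1 <= i < n.+2) (v i - u i.+1 + 1))%N
  * q ^+ (\sum_(1 <= i < n.+2) ('C(v i, 2) - 'C(u i.+1 - 1, 2)))%N
  * G (v n.+1).+1 (v n.+2)
  * \prod_(1 <= i < n.+1) G (v i).+1 (u i.+2 - 1).

Lemma aux4 (a A b B L g P : R) :
  a * A * (b * B) * L * (g * P) = a * b * g * (A * B * L * P).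
Proof.
rewrite !mulrA (mulrAC a A b) (mulrAC (a * b * A * B) L g).
by rewrite (mulrAC (a * b * A) B g) (mulrAC (a * b) A g).
Qed.

Lemma Tf_rec n u v : Tf n.+1 u v =
  (- y) ^+ (v 1%N - u 2%N + 1) * q ^+ ('C(v 1%N, 2) - 'C(u 2%N - 1, 2))
  * G (v 1%N).+1 (u 3%N - 1)%N * Tf n (shift u) (shift v).
Proof.
rewrite /Tf (big_nat_recl n.+2 _ (fun i => (v i - u i.+1 + 1)%N)) //.
rewrite (big_nat_recl n.+2 _ (fun i => ('C(v i, 2) - 'C(u i.+1 - 1, 2))%N)) //.
rewrite (big_nat_recl n.+1 _ (fun i => G (v i).+1 (u i.+2 - 1))) //.
rewrite (exprD (- y) (v 1%N - u 2%N + 1)) (exprD q ('C(v 1%N, 2) - 'C(u 2%N - 1, 2))).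
exact: aux4.
Qed.

Lemma Tf0 u v : Tf 0 u v =
  (- y) ^+ (v 1%N - u 2%N + 1) * q ^+ ('C(v 1%N, 2) - 'C(u 2%N - 1, 2)) * G (v 1%N).+1 (v 2%N).
Proof. by rewrite /Tf !big_nat1 big_geq // mulr1. Qed.

Lemma Tf_eq n u u' v : (forall i, (2 <= i)%N -> u i = u' i) -> Tf n u v = Tf n u' v.
Proof.
move=> H; rewrite /Tf.
rewrite (eq_big_nat _ _ (F2 := fun i => (v i - u' i.+1 + 1)%N)); last first.
  by move=> i /andP [i1 _]; rewrite H.
rewrite (eq_big_nat _ _ (F1 := fun i => ('C(v i, 2) - 'C(u i.+1 - 1, 2))%N) (F2 := fun i => ('C(v i, 2) - 'C(u' i.+1 - 1, 2))%N)); last first.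
  by move=> i /andP [i1 _]; rewrite H.
rewrite (eq_big_nat _ _ (F1 := fun i => G (v i).+1 (u i.+2 - 1)) (F2 := fun i => G (v i).+1 (u' i.+2 - 1))) //.
by move=> i /andP [i1 _]; rewrite H.
Qed.

Lemma expand2 n (A : 'M[R]_n.+2) :
  (forall i : 'I_n.+2, (2 <= i)%N -> A i ord0 = 0) ->
  \det A = A ord0 ord0 * \det (row' ord0 (col' ord0 A))
           - A (lift ord0 ord0) ord0 * \det (row' (lift ord0 ord0) (col' ord0 A)).
Proof.
move=> H.
rewrite (expand_det_col _ ord0) !big_ord_recl big1 ?addr0; last first.
  by move=> i _; rewrite H // mul0r.
rewrite /cofactor /= expr0 mul1r expr1 mulN1r mulrN.
by [].
Qed.

Opaque Tf.

Definition Hyp n (u v : nat -> nat) : Prop :=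
  [/\ (u 1%N < u 2%N)%N,
      (forall i, (1 <= i)%N -> (i <= n)%N -> (u i.+1 < v i)%N && (v i < u i.+2)%N),
      (u n.+2 < v n.+1)%N & (v n.+1 < v n.+2)%N].

Lemma mono n u v : Hyp n.+1 u v -> forall m, (m <= n)%N -> (v 1%N < u m.+3)%N.
Proof.
case=> h1 h2 h3 h4; elim=> [|m IH] mn.
  by case/andP: (h2 1%N isT isT).
have := h2 m.+2 isT mn; case/andP => a b.
apply: ltn_trans (IH (ltnW mn)) (ltn_trans a b).
Qed.

Lemma detF n : forall u v, Hyp n u v ->
  \det (Fsub x y q n.+2 u v) = G (u 1%N) (u 2%N - 1)%N * Tf n u v.
Proof.
elim: n => [|n IH] u v [h1 h2 h3 h4].
  rewrite expand2; last by case=> [[|[|i]]].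
  rewrite !mxE !det_mx11 !mxE /bump /= Tf0 key ?(ltnW h3) ?(ltnW h4) //.
  have -> : bump 0 0 = 1%N by []. by rewrite !mulrA.
rewrite expand2; last first.
  case=> [[|[|i]]] //= Hi _; rewrite mxE Glt //.
  exact: (@mono n u v (And4 h1 h2 h3 h4) i Hi).
pose u' := fun j => if j is j'.+2 then u j'.+3 else u j.
have M0 : row' ord0 (col' ord0 (Fsub x y q n.+3 u v)) = Fsub x y q n.+2 (shift u) (shift v).
  by apply/matrixP=> i j; rewrite !mxE.
have M1 : row' (lift ord0 ord0) (col' ord0 (Fsub x y q n.+3 u v)) = Fsub x y q n.+2 u' (shift v).
  by apply/matrixP=> i j; rewrite !mxE; case: i => [[|i] Hi].
have [a13 b13] := andP (h2 1%N isT isT).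
rewrite M0 M1 !IH; last first.
- split => //.
  + exact: ltn_trans a13 b13.
  + by move=> i _ iN; apply: h2.
- split => //.
  + exact: ltn_trans h1 (ltn_trans a13 b13).
  + by case=> [|i] // _ iN; apply: h2.
rewrite (@Tf_eq n u' (shift u) (shift v)); last by case=> [|[|i]].
rewrite !mxE !(mulrA (G _ _) (G _ _) (Tf _ _ _)) -mulrBl.
rewrite [_ - _](_ : _ = G (u 1%N) (v 1%N) * G (u 2%N) (u 3%N - 1)%N
   - G (u 2%N) (v 1%N) * G (u 1%N) (u 3%N - 1)%N) //.
rewrite key //; last first.
- rewrite -ltnS -[(u 3%N - 1)%N.+1]addn1 subnK //.
  exact: leq_ltn_trans (leq0n _) b13.
- exact: ltnW.
by rewrite Tf_rec !mulrA.
Qed.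
Lemma lt_sub1 a b : (a < b)%N -> (a <= b - 1)%N.
Proof. by move=> h; rewrite subn1 -ltnS prednK // (leq_ltn_trans (leq0n a) h). Qed.

Lemma FzG a b : (a < b)%N ->
  Fz ((b)%:Z - (a)%:Z - 2) (x * q ^+ a.+1) (y * q ^+ a.+1) q = G a.+1 (b - 1)%N.
Proof.
move=> ab; rewrite -(subnKC ab).
case: (b - a.+1)%N => [|m].
  rewrite addn0 subn1 /= (Glt (ltnSn a)).
  have -> : ((a.+1)%:Z - a%:Z - 2 = Negz 0)%R.
    by rewrite -addn1 PoszD (addrC a%:Z) addrK.
  by [].
have -> : ((a.+1 + m.+1)%:Z - a%:Z - 2 = m%:Z)%R.
  have -> : (a.+1 + m.+1 = a + (m + 2))%N by rewrite addn2 !addnS addSn.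
  by rewrite PoszD (addrC a%:Z) addrK PoszD addrK.
rewrite /= addnS subn1 /= /Fmat_entry leq_addr addKn.
by [].
Qed.
End S.

Theorem theorem5p4 (R : comRingType) (x y q : R) (k : nat) (u v : nat -> nat) :
  (2 <= k)%N ->
  (u 1 < u 2)%N ->
  (forall i : nat, (1 <= i)%N -> (i <= k - 2)%N ->
      (u i.+1 < v i)%N && (v i < u i.+2)%N) ->
  (u k < v k.-1)%N -> (v k.-1 < v k)%N ->
  \det (Fsub x y q k u v) =
    (- y) ^+ (\sum_(1 <= i < k) (v i - u i.+1 + 1))%N
    * q ^+ (\sum_(1 <= i < k) ('C(v i, 2) - 'C(u i.+1 - 1, 2)))%N
    * F (u 2%N - u 1%N - 1) (x * q ^+ u 1%N) (y * q ^+ u 1%N) q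
    * F (v k - v k.-1 - 1) (x * q ^+ (v k.-1).+1) (y * q ^+ (v k.-1).+1) q
    * \prod_(1 <= i < k.-1)
        Fz ((u i.+2)%:Z - (v i)%:Z - 2) (x * q ^+ (v i).+1) (y * q ^+ (v i).+1) q.
Proof.
move=> k2 h1 h2 h3 h4.
case: k k2 h2 h3 h4 => [|[|n]] // _ h2 h3 h4.
have h2' : forall i, (1 <= i)%N -> (i <= n)%N -> (u i.+1 < v i)%N && (v i < u i.+2)%N.
  by move=> i a b; apply: h2 => //; rewrite subn2.
rewrite (@detF R x y q n u v (And4 h1 h2' h3 h4)) /Tf.
have e1 : F (u 2%N - u 1%N - 1) (x * q ^+ u 1%N) (y * q ^+ u 1%N) q
          = Fmat_entry x y q (u 1%N) (u 2%N - 1)%N.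
  by rewrite /Fmat_entry lt_sub1 // subnAC.
have e2 : F (v n.+2 - v n.+1 - 1) (x * q ^+ (v n.+1).+1) (y * q ^+ (v n.+1).+1) q
          = Fmat_entry x y q (v n.+1).+1 (v n.+2).
  by rewrite /Fmat_entry h4 subn1 subnS.
have e3 : \prod_(1 <= i < n.+1)
        Fz ((u i.+2)%:Z - (v i)%:Z - 2) (x * q ^+ (v i).+1) (y * q ^+ (v i).+1) q
   = \prod_(1 <= i < n.+1) Fmat_entry x y q (v i).+1 (u i.+2 - 1)%N.
  apply: eq_big_nat => i /andP [i1 iN].
  by apply: FzG; case/andP: (h2' i i1 iN).
rewrite e1 e2 e3 !mulrA (mulrC (Fmat_entry x y q (u 1%N) _)).
by rewrite (mulrAC _ (Fmat_entry x y q (u 1%N) _)).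
Qed.
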